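(* Let $M$ be an odd prime, $p \in \mathbb{Z}_M^{\times}$, $q_1, q_2, q_3, q_4 \in \mathbb{Z}_M$, and let $K, C$ be positive integers with $\gcd(K, M) = 1$. Let $\varphi, \psi : \mathbb{Q} \to \mathbb{Z}$ satisfy $\varphi(x + C) = -\varphi(x)$ and $\psi(x + C) = -\psi(x)$ for all $x \in \frac{C}{K}\mathbb{Z}$. Identify each $x = \frac{j}{K}$ ($j \in \mathbb{Z}$) with $\bar{x} := jK^{-1} \in \mathbb{Z}_M$, and let $x \mapsto p^x$ be an assignment $\frac{1}{K}\mathbb{Z} \to \mathbb{Z}_M$ with $p^{x+a} = p^x p^a$ for all $x \in \frac1K\mathbb{Z}$ and integers $a \ge 0$. For $x \in \frac{1}{K}\mathbb{Z}$ with $\bar{x} \ne 0$ and $a, b \in \mathbb{Z}_M$ set \[ s_M(x; a, b) := \big(p^x + a\,\varphi(Cx) + b\,\psi(Cx)\big)\cdot \bar{x}^{-1} \in \mathbb{Z}_M . \] Let $t \in \frac{1}{K}\mathbb{Z}$ and nonnegative integers $u, v$ be such that $\bar t,\ \overline{t+2v+1},\ \overline{t+2u},\ \overline{t+2u+2v+1}$ are all nonzero in $\mathbb{Z}_M$, and put \[ s_0 = s_M(t; q_1,q_2),\ s_1 = s_M(t+2v+1; q_1,q_2),\ s_2 = s_M(t+2u; q_3,q_4),\ s_3 = s_M(t+2u+2v+1; q_3,q_4). \] Assume $2(s_1 p^{2u} - s_3) \not\equiv 0 \pmod M$. For $s^* \in \mathbb{Z}_M$ with $s_1 p^{2u} -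 s^* \ne 0$ define \[ v^*(s^* ) := \frac{ -s_0 p^{2u} \bar t - s_1 p^{2u}(\bar t+1) + s_2(\bar t+2u) + s^*(\bar t+2u+1) }{ 2(s_1 p^{2u} - s^* ) } \in \mathbb{Z}_M . \] Then $s_3$ is the only element $s^* \in \mathbb{Z}_M$ (with $s_1 p^{2u} - s^* \neq 0$) such that $v^*(s^* ) \equiv v \pmod M$.
   Context: All arithmetic is in $\mathbb{Z}_M$; $K^{-1}$ denotes the inverse of $K$ modulo $M$. The values $s_0,\dots,s_3$ are the evaluations used in the paper's symmetric invariant-based protocol (with $t$ a hidden evaluation index and $u,v$ session parameters), and $v^*(s^* )$ is the receiver's recovery formula for $v$ from a candidate third evaluation $s^*$. *)

(* Defs.v *)
From HB Require Import structures.
From mathcomp Require Import all_boot all_order all_algebra.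

Import Order.TTheory GRing.Theory Num.Theory.
Local Open Scope ring_scope.

(* Elements of (1/K)Z are represented by their numerator j : int (x = j/K).
   Z_M is 'F_M (M prime). *)

Definition ratK (K : nat) (j : int) : rat := j%:~R / K%:R.

Definition barK (M K : nat) (j : int) : 'F_M := j%:~R * (K%:R)^-1.

(* s_M(x; a, b) for x = j/K, with power assignment pw (pw j = p^(j/K)) *)
Definition sM (M K C : nat) (pw : int -> 'F_M) (phi psi : rat -> int)
  (j : int) (a b : 'F_M) : 'F_M :=
  (pw j + a * (phi (C%:R * ratK K j))%:~R + b * (psi (C%:R * ratK K j))%:~R)
    * (barK M K j)^-1.

(* Main.v *)
Require Import Defs.
From HB Require Import structures.
From mathcomp Require Import all_boot all_order all_algebra.
From mathcomp Require Import ring.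
Import Order.TTheory GRing.Theory Num.Theory.
Local Open Scope ring_scope.

Lemma barK_shift (M K : nat) (j : int) (n : nat) : prime M -> coprime K M ->
  barK M K (j + (n * K)%N%:Z) = barK M K j + n%:R.
Proof.
move=> pM cKM.
have hK : (K%:R : 'F_M) != 0.
  rewrite -(dvdn_pcharf (pchar_Fp pM)) -prime_coprime // coprime_sym //.
rewrite /barK intrD mulrDl; congr (_ + _).
have -> : ((n * K)%N%:Z)%:~R = (n%:R * K%:R : 'F_M) by rewrite -natrM.
by rewrite mulfK.
Qed.

Lemma phi_shift (K C : nat) (phi : rat -> int) : (0 < K)%N ->
  (forall j : int, phi (C%:R * ratK K j + C%:R) = - phi (C%:R * ratK K j)) ->
  forall j n, phi (C%:R * ratK K (j + (n * K)%N%:Z)) = (-1) ^+ n * phi (C%:R * ratK K j).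
Proof.
move=> K0 h j; elim=> [|n IH]; first by rewrite mul0n addr0 expr0 mul1r.
have -> : C%:R * ratK K (j + (n.+1 * K)%N%:Z) = C%:R * ratK K (j + (n * K)%N%:Z) + C%:R.
  have hK : (K%:R : rat) != 0 by rewrite pnatr_eq0 -lt0n.
  rewrite /ratK; field.
  by [].
by rewrite h IH exprS mulN1r mulNr.
Qed.
Lemma absmain (F : fieldType) (tb P A B p2u p2v1 q1 q2 q3 q4 s0 s1 s2 s3 : F) (u v : nat) :
 tb + (2*u+2*v+1)%:R != 0 ->
 s0 * tb = P + q1 * A + q2 * B ->
 s1 * (tb + (2*v+1)%:R) = P * p2v1 + q1 * - A + q2 * - B ->
 s2 * (tb + (2*u)%:R) = P * p2u + q3 * A + q4 * B ->
 s3 * (tb + (2*u+2*v+1)%:R) = P * (p2u * p2v1) + q3 * - A + q4 * - B ->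
 let vstar := fun s : F => (- s0 * p2u * tb - s1 * p2u * (tb + 1)
     + s2 * (tb + (2 * u)%:R) + s * (tb + (2 * u)%:R + 1))
    / (2 * (s1 * p2u - s)) in
 2 * (s1 * p2u - s3) != 0 ->
 (s1 * p2u - s3 != 0 /\ vstar s3 = v%:R) /\
 (forall s, s1 * p2u - s != 0 -> vstar s = v%:R -> s = s3).
Proof.
move=> hb h0 h1 h2 h3 vstar hD.
have h20 : (2 : F) != 0 by apply: contraNneq hD => ->; rewrite mul0r.
have hD3 : s1 * p2u - s3 != 0 by apply: contraNneq hD => ->; rewrite mulr0.
pose N := fun s : F => - s0 * p2u * tb - s1 * p2u * (tb + 1)
     + s2 * (tb + (2 * u)%:R) + s * (tb + (2 * u)%:R + 1).
have key : N s3 - 2 * v%:R * (s1 * p2u - s3) =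
  - p2u * (s0 * tb - (P + q1 * A + q2 * B))
  - p2u * (s1 * (tb + (2*v+1)%:R) - (P * p2v1 + q1 * - A + q2 * - B))
  + (s2 * (tb + (2*u)%:R) - (P * p2u + q3 * A + q4 * B))
  + (s3 * (tb + (2*u+2*v+1)%:R) - (P * (p2u * p2v1) + q3 * - A + q4 * - B)).
  rewrite /N; ring.
rewrite h0 h1 h2 h3 !subrr !mulr0 !addr0 subr0 in key.
move/eqP: key; rewrite subr_eq0 => /eqP key.
have vs : forall s, s1 * p2u - s != 0 -> vstar s = v%:R -> N s = 2 * v%:R * (s1 * p2u - s).
  move=> s hs; rewrite /vstar -/(N s) => e.
  have := divfK (mulf_neq0 h20 hs) (N s); rewrite e => <-; ring.
split.
  split=> //; rewrite /vstar -/(N s3) key; field.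
  by rewrite hD3 h20.
move=> s hs /(vs _ hs) e.
have : (s - s3) * (tb + (2*u+2*v+1)%:R) = (N s - 2 * v%:R * (s1 * p2u - s)) - (N s3 - 2 * v%:R * (s1 * p2u - s3)).
  rewrite /N; ring.
rewrite e key !subrr => /eqP; rewrite mulf_eq0 (negbTE hb) orbF subr_eq0 => /eqP //.
Qed.
Theorem lemma1 (M : nat) (p q1 q2 q3 q4 : 'F_M) (K C : nat)
  (phi psi : rat -> int) (pw : int -> 'F_M) (t : int) (u v : nat) :
  prime M -> odd M -> p != 0 ->
  (0 < K)%N -> (0 < C)%N -> coprime K M ->
  (forall j : int, phi (C%:R * ratK K j + C%:R) = - phi (C%:R * ratK K j)) ->
  (forall j : int, psi (C%:R * ratK K j + C%:R) = - psi (C%:R * ratK K j)) ->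
  (forall (j : int) (a : nat), pw (j + (a * K)%N%:Z) = pw j * p ^+ a) ->
  barK M K t != 0 ->
  barK M K (t + ((2 * v + 1) * K)%N%:Z) != 0 ->
  barK M K (t + ((2 * u) * K)%N%:Z) != 0 ->
  barK M K (t + ((2 * u + 2 * v + 1) * K)%N%:Z) != 0 ->
  let s0 := sM M K C pw phi psi t q1 q2 in
  let s1 := sM M K C pw phi psi (t + ((2 * v + 1) * K)%N%:Z) q1 q2 in
  let s2 := sM M K C pw phi psi (t + ((2 * u) * K)%N%:Z) q3 q4 in
  let s3 := sM M K C pw phi psi (t + ((2 * u + 2 * v + 1) * K)%N%:Z) q3 q4 in
  let tb := barK M K t in
  let vstar := fun s : 'F_M =>
    (- s0 * p ^+ (2 * u) * tb - s1 * p ^+ (2 * u) * (tb + 1)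
     + s2 * (tb + (2 * u)%:R) + s * (tb + (2 * u)%:R + 1))
    / (2 * (s1 * p ^+ (2 * u) - s)) in
  2 * (s1 * p ^+ (2 * u) - s3) != 0 ->
  (s1 * p ^+ (2 * u) - s3 != 0 /\ vstar s3 = v%:R) /\
  (forall s : 'F_M, s1 * p ^+ (2 * u) - s != 0 -> vstar s = v%:R -> s = s3).
Proof.
move=> pM oM p0 K0 C0 cKM hphi hpsi hpw hb0 hb1 hb2 hb3 s0 s1 s2 s3 tb vstar.
have sh := barK_shift _ _ t _ pM cKM.
set A := ((phi (C%:R * ratK K t))%:~R : 'F_M).
set B := ((psi (C%:R * ratK K t))%:~R : 'F_M).
have e : forall n a b, barK M K (t + (n * K)%N%:Z) != 0 ->
  sM M K C pw phi psi (t + (n * K)%N%:Z) a b * (tb + n%:R) =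
  pw t * p ^+ n + a * ((-1) ^+ n)%:~R * A + b * ((-1) ^+ n)%:~R * B.
  move=> n a b hn; rewrite /tb -sh /sM divfK // hpw !(phi_shift _ _ _ K0) //.
  by rewrite !intrM -/A -/B !mulrA.
have so : ((-1) ^+ (2 * v + 1))%:~R = -1 :> 'F_M.
  by rewrite addn1 exprS exprM sqrrN !expr1n mulr1 rmorphN1.
have se : ((-1) ^+ (2 * u))%:~R = 1 :> 'F_M.
  by rewrite exprM sqrrN !expr1n rmorph1.
have so2 : ((-1) ^+ (2 * u + 2 * v + 1))%:~R = -1 :> 'F_M.
  by rewrite -addnA exprD exprM sqrrN !expr1n mul1r addn1 exprS exprM sqrrN !expr1n mulr1 rmorphN1.
have h1 := e _ q1 q2 hb1; rewrite so !mulrN1 in h1.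
have h2 := e _ q3 q4 hb2; rewrite se !mulr1 in h2.
have h3 := e _ q3 q4 hb3; rewrite so2 !mulrN1 (_ : p ^+ (2 * u + 2 * v + 1) = p ^+ (2 * u) * p ^+ (2 * v + 1)) in h3; last by rewrite -exprD addnA.
have h0 : s0 * tb = pw t + q1 * A + q2 * B by rewrite /s0 /sM divfK.
rewrite sh in hb3.
apply: (@absmain _ tb (pw t) A B (p ^+ (2 * u)) (p ^+ (2 * v + 1)) q1 q2 q3 q4 s0 s1 s2 s3 u v) => //.
- by rewrite /s1 h1 !mulrN !mulNr.
- by rewrite /s3 h3 !mulrN !mulNr.
Qed.
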